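(* Let $T$ be a complete $L$-theory with monster model $\mathcal U$; identify $\phi(a,b)$ with $1$ if it holds and $0$ otherwise. Then $T$ is stable if and only if both of the following hold: (i) for every formula $\phi(x,y)$ and every sequence $(a_i:i<\omega)$ in $\mathcal U$ there are a subsequence $(a_{j_i}:i<\omega)$ and a natural number $N$ such that the sequence $\phi(a_{j_i},y)$ converges pointwise to a function $f$ and $\sum_{i=1}^\infty|\phi(a_{j_i},b)-\phi(a_{j_{i+1}},b)|\le N$ for every $b\in\mathcal U$; (ii) for every formula $\phi(x,y)$ and every sequence $(a_i:i<\omega)$ in $\mathcal U$, if the sequence $\phi(a_i,y)$ converges pointwise to a function $f$ and there is a natural number $N$ with $\sum_{i=1}^\infty|\phi(a_i,b)-\phi(a_{i+1},b)|\le N$ for every $b\in\mathcal U$, then $f$ is continuous.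
   Context: $T$ is stable if no formula $\phi(x,y)$ has the order property, i.e. there are no sequences $(a_i),(b_j)$ in $\mathcal U$ with $\phi(a_i,b_j)\iff i<j$. The functions $\phi(a_i,y)$ are regarded as continuous $\{0,1\}$-valued functions on the Stone space $S_{\tilde\phi}(\{a_i:i<\omega\})$ of complete $\tilde\phi$-types over $\{a_i:i<\omega\}$ (where $\tilde\phi(y,x)=\phi(x,y)$), sending a type $q$ to $1$ iff $\phi(a_i,y)\in q$; convergence and continuity of $f$ refer to this space. *)

(* Defs.v *)
From HB Require Import structures.
From mathcomp Require Import all_boot all_order all_algebra.
From mathcomp Require Import all_classical all_reals all_analysis.

Set Implicit Arguments.
Unset Strict Implicit.
Unset Printing Implicit Defensive.

Record signature := Signature {
  fsym : Type;  far : fsym -> nat;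
  rsym : Type;  rar : rsym -> nat
}.

Section FOL.
Variable L : signature.

Inductive term : Type :=
  | t_var : nat -> term
  | t_app : forall f : fsym L, ('I_(far f) -> term) -> term.

(* variable 0 is bound by the innermost quantifier *)
Inductive formula : Type :=
  | f_eq  : term -> term -> formula
  | f_rel : forall r : rsym L, ('I_(rar r) -> term) -> formula
  | f_neg : formula -> formula
  | f_and : formula -> formula -> formula
  | f_ex  : formula -> formula.

Fixpoint term_bound (k : nat) (t : term) : Prop :=
  match t with
  | t_var n => (n < k)%N
  | t_app f ts => forall i, term_bound k (ts i)
  end.

Fixpoint fbound (k : nat) (phi : formula) : Prop :=
  match phi with
  | f_eq t1 t2 => term_bound k t1 /\ term_bound k t2
  | f_rel r ts => forall i, term_bound k (ts i)
  | f_neg p => fbound k p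
  | f_and p q => fbound k p /\ fbound k q
  | f_ex p => fbound k.+1 p
  end.

Definition sentence (phi : formula) : Prop := fbound 0 phi.

Record structure := Structure {
  carrier :> Type;
  s_inh : carrier;
  s_fun : forall f : fsym L, ('I_(far f) -> carrier) -> carrier;
  s_rel : forall r : rsym L, ('I_(rar r) -> carrier) -> Prop
}.

Definition scons (M : Type) (a : M) (e : nat -> M) : nat -> M :=
  fun n => match n with 0 => a | n'.+1 => e n' end.

Fixpoint eval (M : structure) (e : nat -> M) (t : term) : M :=
  match t with
  | t_var n => e n
  | t_app f ts => @s_fun M f (fun i => eval e (ts i))
  end.

Fixpoint sat (M : structure) (e : nat -> M) (phi : formula) : Prop :=
  match phi with
  | f_eq t1 t2 => eval e t1 = eval e t2
  | f_rel r ts => @s_rel M r (fun i => eval e (ts i))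
  | f_neg p => ~ sat e p
  | f_and p q => sat e p /\ sat e q
  | f_ex p => exists a : M, sat (scons a e) p
  end.

(* truth of a sentence (the environment is irrelevant for sentences) *)
Definition models_sentence (M : structure) (sigma : formula) : Prop :=
  sat (fun _ => s_inh M) sigma.

Definition theory := formula -> Prop.

Definition is_model (M : structure) (T : theory) : Prop :=
  forall sigma, T sigma -> models_sentence M sigma.

Definition complete_theory (T : theory) : Prop :=
  (forall sigma, T sigma -> sentence sigma) /\
  (exists M : structure, is_model M T) /\
  (forall sigma, sentence sigma ->
     (forall M : structure, is_model M T -> models_sentence M sigma) \/
     (forall M : structure, is_model M T -> models_sentence M (f_neg sigma))).

(* Environment for a tuple y of length m followed by a sequence c of
   parameters: variable k < m is y_k, variable m + l is c l. *)
Definition env_par (M : Type) (m : nat) (y : 'I_m -> M) (c : nat -> M)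
  : nat -> M :=
  fun k => match ltnP k m with
           | LtnNotGeq h => y (Ordinal h)
           | _ => c (k - m)%N
           end.

Fixpoint In_seq (A : Type) (x : A) (s : seq A) : Prop :=
  match s with [::] => False | y :: s' => y = x \/ In_seq x s' end.

(* aleph_1-saturation: every set of formulas in m free variables with
   parameters from a countable set (enumerated by c) which is finitely
   satisfiable in M is realized in M. *)
Definition aleph1_saturated (M : structure) : Prop :=
  forall (m : nat) (c : nat -> M) (P : formula -> Prop),
    (forall s : seq formula, (forall psi, In_seq psi s -> P psi) ->
       exists y : 'I_m -> M, forall psi, In_seq psi s -> sat (env_par y c) psi) ->
    exists y : 'I_m -> M, forall psi, P psi -> sat (env_par y c) psi.

(* A formula phi(x,y) with x an n-tuple and y an m-tuple of variables:
   x_i is variable i, y_j is variable n + j. *)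
Definition env2 (M : structure) (n m : nat) (a : 'I_n -> M) (b : 'I_m -> M)
  : nat -> M :=
  fun k => match ltnP k n with
           | LtnNotGeq h => a (Ordinal h)
           | _ => match ltnP (k - n) m with
                  | LtnNotGeq h' => b (Ordinal h')
                  | _ => s_inh M
                  end
           end.

Definition holds (M : structure) (n m : nat) (phi : formula)
  (a : 'I_n -> M) (b : 'I_m -> M) : Prop := sat (env2 a b) phi.

Definition tv (M : structure) (n m : nat) (phi : formula)
  (a : 'I_n -> M) (b : 'I_m -> M) : nat :=
  if `[< holds phi a b >] then 1%N else 0%N.

(* Order property in M; T is stable iff no formula has it (in the
   monster model M). *)
Definition order_property (M : structure) (n m : nat) (phi : formula) : Prop :=
  exists (a : nat -> 'I_n -> M) (b : nat -> 'I_m -> M),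
    forall i j, holds phi (a i) (b j) <-> (i < j)%N.

Definition stable_in (M : structure) : Prop :=
  forall (n m : nat) (phi : formula), fbound (n + m) phi ->
    ~ order_property M n m phi.

(* The Stone space S_{phi~}({a_i : i < omega}) of complete phi~-types
   over {a_i}: a type q is identified with its characteristic sequence
   (q i = true iff phi(a_i,y) \in q); it is a subspace of the Cantor
   space {ptws nat -> bool} (product topology, bool discrete), and q is a complete type iff it
   is finitely satisfiable in M. *)
Definition phi_types (M : structure) (n m : nat) (phi : formula)
  (a : nat -> 'I_n -> M) : set {ptws nat -> bool} :=
  [set q | forall k : nat, exists b : 'I_m -> M,
             forall i, (i < k)%N -> (holds phi (a i) b <-> q i)].

End FOL.

(* Main.v *)
Require Import Defs.
From HB Require Import structures.
From mathcomp Require Import all_boot all_order all_algebra.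
From mathcomp Require Import all_classical all_reals all_analysis.
From mathcomp Require Import zify.
Import Order.TTheory GRing.Theory Num.Theory.
Local Open Scope classical_set_scope.
Set Implicit Arguments.
Unset Strict Implicit.
Unset Printing Implicit Defensive.
Fixpoint rn_t (L : signature) (s : nat -> nat) (t : term L) : term L :=
  match t with
  | t_var n => t_var L (s n)
  | t_app f ts => t_app (fun i => rn_t s (ts i))
  end.

Arguments rn_t {L}.

Definition upr (s : nat -> nat) : nat -> nat :=
  fun v => match v with 0 => 0 | v'.+1 => (s v').+1 end.

Fixpoint rn (L : signature) (s : nat -> nat) (p : formula L) : formula L :=
  match p with
  | f_eq t1 t2 => f_eq (rn_t s t1) (rn_t s t2)
  | f_rel r ts => f_rel (fun i => rn_t s (ts i))
  | f_neg q => f_neg (rn s q)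
  | f_and q1 q2 => f_and (rn s q1) (rn s q2)
  | f_ex q => f_ex (rn (upr s) q)
  end.

Arguments rn {L}.

Lemma eval_rn (L : signature) (M : structure L) (s : nat -> nat) (e : nat -> M) t :
  Defs.eval e (rn_t s t) = Defs.eval (fun v => e (s v)) t.
Proof.
elim: t => [n|f ts IH] //=; congr (s_fun _); apply: funext => i; exact: IH.
Qed.

Lemma sat_rn (L : signature) (M : structure L) (p : formula L) :
  forall (s : nat -> nat) (e : nat -> M),
  sat e (rn s p) <-> sat (fun v => e (s v)) p.
Proof.
elim: p => [t1 t2|r ts|q IH|q1 IH1 q2 IH2|q IH] s e /=.
- by rewrite !eval_rn.
- have -> : (fun i => Defs.eval e (rn_t s (ts i))) = (fun i => Defs.eval (fun v => e (s v)) (ts i)).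
    by apply: funext => i; rewrite eval_rn.
  by [].
- by rewrite IH.
- by rewrite IH1 IH2.
- split=> -[a Ha]; exists a; move: Ha; rewrite IH;
  (have -> : (fun v => scons a e (upr s v)) = scons a (fun v => e (s v)) by apply: funext => -[|v]);
  by [].
Qed.

Lemma eval_bound (L : signature) (M : structure L) (k : nat) (e e' : nat -> M) t :
  term_bound k t -> (forall v, (v < k)%N -> e v = e' v) ->
  Defs.eval e t = Defs.eval e' t.
Proof.
move=> + H; elim: t => [n|f ts IH] /=; first by move/H.
by move=> Hb; congr (s_fun _); apply: funext => i; apply: IH.
Qed.

Lemma sat_bound (L : signature) (M : structure L) (p : formula L) :
  forall (k : nat) (e e' : nat -> M), fbound k p ->
  (forall v, (v < k)%N -> e v = e' v) -> (sat e p <-> sat e' p).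
Proof.
elim: p => [t1 t2|r ts|q IH|q1 IH1 q2 IH2|q IH] k e e' /= Hb H.
- by case: Hb => h1 h2; rewrite (eval_bound h1 H) (eval_bound h2 H).
- have -> : (fun i => Defs.eval e (ts i)) = (fun i => Defs.eval e' (ts i)) => //.
  by apply: funext => i; apply: eval_bound (Hb i) H.
- by rewrite (IH k e e').
- by case: Hb => h1 h2; rewrite (IH1 k e e') // (IH2 k e e').
- split=> -[a Ha]; exists a; move: Ha; apply (IH k.+1) => // -[|v] //= hv;
    by rewrite H.
Qed.

Lemma sat_ext (L : signature) (M : structure L) (p : formula L) (e e' : nat -> M) :
  sat e p -> (forall v, e v = e' v) -> sat e' p.
Proof. by move=> + H; rewrite (_ : e = e') //; apply: funext. Qed.

Lemma sat_exn (L : signature) (M : structure L) (p : formula L) (N : nat) :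
  forall (e : nat -> M),
  sat e (iter N (@f_ex L) p) <->
  exists w : nat -> M, sat (fun v => if (v < N)%N then w v else e (v - N)%N) p.
Proof.
elim: N => [|N IH] e /=.
  split; first by move=> h; exists e; eapply sat_ext; first exact: h; move=> v /=; rewrite subn0.
  by case=> w Hw; eapply sat_ext; first exact: Hw; move=> v /=; rewrite subn0.
split.
- case=> a /IH [w Hw]; exists (fun v => if (v < N)%N then w v else a).
  eapply sat_ext; first exact: Hw; move=> v /=.
  case: (ltnP v N) => h1; first by rewrite ltnS ltnW.
  case: (ltnP v N.+1) => h2.
    have -> : v = N by lia.
    by rewrite subnn ?ltnSn.
  by rewrite (_ : (v - N = (v - N.+1).+1)%N) //; lia.
- case=> w Hw; exists (w N); apply/IH; exists w; eapply sat_ext; first exact: Hw; move=> v /=.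
  case: (ltnP v N) => h1; first by rewrite ltnS ltnW.
  case: (ltnP v N.+1) => h2.
    have -> : v = N by lia.
    by rewrite subnn ?ltnSn.
  by rewrite (_ : (v - N = (v - N.+1).+1)%N) //; lia.
Qed.

Definition ftop (L : signature) : formula L := f_eq (t_var L 0) (t_var L 0).

Fixpoint andN (L : signature) (F : nat -> formula L) (k : nat) : formula L :=
  match k with 0 => ftop L | k'.+1 => f_and (F k') (andN F k') end.

Lemma sat_andN (L : signature) (M : structure L) (F : nat -> formula L) k (e : nat -> M) :
  sat e (andN F k) <-> (forall i, (i < k)%N -> sat e (F i)).
Proof.
elim: k => [|k IH] /=; first by split => // _ i.
rewrite IH; split.
  by case=> h1 h2 i; rewrite ltnS leq_eqVlt => /orP [/eqP ->|]; [ | apply: h2].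
by move=> h; split; [apply: h | move=> i hi; apply: h; lia].
Qed.

Definition sig_ij (n m i j : nat) : nat -> nat :=
  fun v => if (v < n)%N then (i * (n + m + 1) + v)%N else (j * (n + m + 1) + v)%N.

Definition HGf (L : signature) (n m : nat) (phi : formula L) (k : nat) : formula L :=
  andN (fun i => andN (fun j => if (i < j)%N then rn (sig_ij n m i j) phi
                                 else f_neg (rn (sig_ij n m i j) phi)) k) k.

Definition rdA (M : Type) (n m : nat) (e : nat -> M) (i : nat) : 'I_n -> M :=
  fun p => e (i * (n + m + 1) + p)%N.
Definition rdB (M : Type) (n m : nat) (e : nat -> M) (j : nat) : 'I_m -> M :=
  fun q => e (j * (n + m + 1) + n + q)%N.
Arguments rdA {M} n m e i.
Arguments rdB {M} n m e j.

Lemma holds_rd (L : signature) (M : structure L) n m (phi : formula L) (e : nat -> M) i j :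
  fbound (n + m) phi ->
  (sat e (rn (sig_ij n m i j) phi) <-> holds phi (rdA n m e i) (rdB n m e j)).
Proof.
move=> hb; rewrite sat_rn; apply: (sat_bound hb) => v hv.
rewrite /env2 /sig_ij; case: ltnP => h1.
  by rewrite /rdA /=.
case: ltnP => h2; last by lia.
by rewrite /rdB /=; congr e; lia.
Qed.

Lemma HG_sem (L : signature) (M : structure L) n m (phi : formula L) (e : nat -> M) k :
  fbound (n + m) phi ->
  (sat e (HGf n m phi k) <->
   forall i j, (i < k)%N -> (j < k)%N -> (holds phi (rdA n m e i) (rdB n m e j) <-> (i < j)%N)).
Proof.
move=> hb; rewrite /HGf sat_andN; split.
  move=> h i j hi hj; move/(_ i hi): h; rewrite sat_andN => /(_ j hj).
  case: ifP => hij; rewrite ?holds_rd //=.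
  by rewrite (holds_rd _ _ _ hb); split.
move=> h i hi; rewrite sat_andN => j hj; have := h i j hi hj.
case: ifP => hij /=; rewrite (holds_rd _ _ _ hb) => ->//.
Qed.

Lemma rd_local (M : Type) n m (e e' : nat -> M) k :
  (forall p, (p < k * (n + m + 1))%N -> e p = e' p) ->
  forall i, (i < k)%N -> rdA n m e i = rdA n m e' i /\ rdB n m e i = rdB n m e' i.
Proof.
move=> H i hi; split; apply: funext => p; rewrite /rdA /rdB; apply: H.
  have := ltn_ord p; nia.
have := ltn_ord p; nia.
Qed.

Lemma HG_local (L : signature) (M : structure L) n m (phi : formula L) (e e' : nat -> M) k :
  fbound (n + m) phi ->
  (forall p, (p < k * (n + m + 1))%N -> e p = e' p) ->
  sat e (HGf n m phi k) -> sat e' (HGf n m phi k).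
Proof.
move=> hb H; rewrite !(HG_sem _ _ hb) => h i j hi hj.
have [h1 _] := rd_local H hi; have [_ h2] := rd_local H hj.
by rewrite -h1 -h2; apply: h.
Qed.

Lemma HG_mono (L : signature) (M : structure L) n m (phi : formula L) (e : nat -> M) k K :
  fbound (n + m) phi -> (k <= K)%N ->
  sat e (HGf n m phi K) -> sat e (HGf n m phi k).
Proof.
move=> hb hk; rewrite !(HG_sem _ _ hb) => h i j hi hj; apply: h; lia.
Qed.

Definition enc (L : signature) (M : structure L) n m (A : nat -> 'I_n -> M) (Bf : nat -> 'I_m -> M)
  : nat -> M :=
  fun p => match ltnP (p %% (n + m + 1)) n with
           | LtnNotGeq h => A (p %/ (n + m + 1)) (Ordinal h)
           | _ => match ltnP (p %% (n + m + 1) - n) m with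
                  | LtnNotGeq h' => Bf (p %/ (n + m + 1)) (Ordinal h')
                  | _ => s_inh M
                  end
           end.

Lemma rd_enc (L : signature) (M : structure L) n m (A : nat -> 'I_n -> M) (Bf : nat -> 'I_m -> M) i :
  rdA n m (enc A Bf) i = A i /\ rdB n m (enc A Bf) i = Bf i.
Proof.
have hB : (0 < n + m + 1)%N by rewrite addn1.
split; apply: funext => p; rewrite /rdA /rdB /enc.
- have hp := ltn_ord p.
  have E1 : ((i * (n + m + 1) + p) %/ (n + m + 1) = i)%N.
    by rewrite divnMDl // divn_small //; lia.
  have E2 : ((i * (n + m + 1) + p) %% (n + m + 1) = p)%N.
    by rewrite modnMDl modn_small //; lia.
  move: (ltnP _ n); rewrite E1 E2 => c; case: c => h; last by lia.
  by congr A; apply: val_inj.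
- have hp := ltn_ord p.
  have E1 : ((i * (n + m + 1) + n + p) %/ (n + m + 1) = i)%N.
    by rewrite -addnA divnMDl // divn_small //; lia.
  have E2 : ((i * (n + m + 1) + n + p) %% (n + m + 1) = n + p)%N.
    by rewrite -addnA modnMDl modn_small //; lia.
  move: (ltnP _ n); rewrite E1 E2 => c; case: c => h; first by lia.
  move: (ltnP _ m); rewrite addKn => c; case: c => h'; last by lia.
  by congr Bf; apply: val_inj.
Qed.

Definition Inv (L : signature) (U : structure L) n m (phi : formula L) (s : nat) (e : nat -> U) :=
  forall k, exists e' : nat -> U, (forall p, (p < s)%N -> e' p = e p) /\ sat e' (HGf n m phi k).

Definition tau (s N : nat) : nat -> nat :=
  fun p => if (p < s)%N then (N + 1 + p)%N else if p == s then N else (p - s - 1)%N.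

Definition Phi (L : signature) n m (phi : formula L) (s k : nat) : formula L :=
  iter (k * (n + m + 1)) (@f_ex L) (rn (tau s (k * (n + m + 1))) (HGf n m phi k)).

Lemma env_par0 (M : Type) (y : 'I_1 -> M) c : env_par y c 0 = y ord0.
Proof. by rewrite /env_par; case: ltnP => // h; congr y; apply: val_inj. Qed.

Lemma env_parS (M : Type) (y : 'I_1 -> M) c v : env_par y c v.+1 = c v.
Proof. by rewrite /env_par; case: ltnP => // h; rewrite subn1. Qed.

Lemma Ecomp (M : Type) (w : nat -> M) (y : 'I_1 -> M) c N s p :
  (if (tau s N p < N)%N then w (tau s N p) else env_par y c (tau s N p - N)%N) =
  if (p < s)%N then c p else if p == s then y ord0 else
  if (p < s + 1 + N)%N then w (p - s - 1)%N else env_par y c (p - s - 1 - N)%N.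
Proof.
rewrite /tau; case: (ltnP p s) => h1.
  have -> : (N + 1 + p < N)%N = false by lia.
  by rewrite (_ : (N + 1 + p - N = p.+1)%N) ?env_parS //; lia.
case: eqP => h2.
  by rewrite ltnn subnn env_par0.
case: (ltnP (p - s - 1) N) => h3; case: (ltnP p (s + 1 + N)) => h4 //; try lia.
Qed.

Lemma list_bound (L : signature) (P : nat -> formula L) (l : seq (formula L)) :
  (forall psi, In_seq psi l -> exists k, psi = P k) ->
  exists K, forall psi, In_seq psi l -> exists k, (k <= K)%N /\ psi = P k.
Proof.
elim: l => [|a l IH] H; first by exists 0.
have [K HK] := IH (fun psi h => H psi (or_intror h)).
have [k0 Hk0] := H a (or_introl erefl).
exists (maxn K k0) => psi [<-|h].
  by exists k0; split => //; rewrite leq_maxr.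
have [k [hk ->]] := HK _ h; exists k; split => //; lia.
Qed.

Lemma Inv_step (L : signature) (U : structure L) n m (phi : formula L) s (e : nat -> U) :
  aleph1_saturated U -> fbound (n + m) phi -> Inv n m phi s e ->
  exists x, Inv n m phi s.+1 (fun p => if p == s then x else e p).
Proof.
move=> sat1 hb hI.
pose P := fun psi : formula L => exists k, psi = Phi n m phi s k.
have [y Hy] : exists y : 'I_1 -> U, forall psi, P psi -> sat (env_par y e) psi.
  apply: (sat1 1 e P) => l Hl.
  have [K HK] := list_bound Hl.
  have [e' [He'1 He'2]] := hI K.
  exists (fun _ => e' s) => psi /HK [k [hk ->]].
  rewrite /Phi sat_exn; exists (fun v => e' (v + s + 1)%N); rewrite sat_rn.
  apply: (HG_local hb); last exact: (HG_mono hb hk He'2).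
  move=> p hp; rewrite (Ecomp (fun v => e' (v + s + 1)%N)).
  case: ltnP => h1; first by rewrite He'1.
  case: eqP => h2; first by rewrite h2.
  case: ltnP => h3; last by lia.
  by congr e'; lia.
exists (y ord0) => k.
have /sat_exn [w Hw] := Hy _ (ex_intro _ k erefl).
rewrite sat_rn in Hw.
eexists; split; last exact: Hw.
move=> p hp /=; rewrite Ecomp.
case: ltnP => h1; first by case: eqP => //; lia.
by case: eqP => // h2; lia.
Qed.

Fixpoint build (M : Type) (d : M) (g : nat * (nat -> M) -> M) (t : nat) : nat -> M :=
  match t with
  | 0 => fun _ => d
  | t'.+1 => fun p => if p == t' then g (t', build d g t') else build d g t' p
  end.

Lemma build_stable (M : Type) (d : M) g t p : (p < t)%N -> build d g t p = build d g p.+1 p.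
Proof.
elim: t => [|t IH] // hp.
rewrite [in LHS]/=; case: eqP => [->|h]; first by rewrite /= eqxx.
rewrite IH //; lia.
Qed.

Definition HGfin (L : signature) (U : structure L) n m (phi : formula L) (k : nat) :=
  exists (A : nat -> 'I_n -> U) (Bf : nat -> 'I_m -> U),
    forall i j, (i < k)%N -> (j < k)%N -> (holds phi (A i) (Bf j) <-> (i < j)%N).

Lemma CL (L : signature) (U : structure L) n m (phi : formula L) :
  aleph1_saturated U -> fbound (n + m) phi ->
  (forall k, HGfin U n m phi k) -> order_property U n m phi.
Proof.
move=> sat1 hb hfin.
have step : forall se : nat * (nat -> U), exists x,
    Inv n m phi se.1 se.2 -> Inv n m phi se.1.+1 (fun p => if p == se.1 then x else se.2 p).
  move=> [s e] /=; have [h|h] := pselect (Inv n m phi s e).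
    by have [x hx] := Inv_step sat1 hb h; exists x.
  by exists (s_inh U).
have [g Hg] := choice step.
pose E := build (s_inh U) g.
have I0 : Inv n m phi 0 (E 0).
  move=> k; have [A [Bf H]] := hfin k; exists (enc A Bf); split => //.
  rewrite (HG_sem _ _ hb) => i j hi hj.
  have [-> _] := rd_enc A Bf i; have [_ ->] := rd_enc A Bf j.
  exact: H.
have IA : forall t, Inv n m phi t (E t).
  elim => [//|t IH]; exact: (Hg (t, E t) IH).
pose einf := fun p => E p.+1 p.
exists (fun i => rdA n m einf i), (fun j => rdB n m einf j) => i j.
pose k := (i + j).+1.
have [e' [He'1 He'2]] := IA (k * (n + m + 1))%N k.
have : sat einf (HGf n m phi k).
  apply: (HG_local hb _ He'2) => p hp.
  by rewrite He'1 // /einf /E build_stable.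
rewrite (HG_sem _ _ hb) => /(_ i j); apply; rewrite /k; lia.
Qed.

Definition infinite_set (S : nat -> Prop) := forall N, exists x, (N <= x)%N /\ S x.

Definition ramsey_concl (r : nat) :=
  forall (c : seq nat -> bool) (S : nat -> Prop), infinite_set S ->
  exists H : nat -> Prop, infinite_set H /\ (forall x, H x -> S x) /\
    exists col, forall s, size s = r -> sorted ltn s -> (forall x, x \in s -> H x) -> c s = col.

Lemma ramsey_step_one r : ramsey_concl r ->
  forall (c : seq nat -> bool) (S : nat -> Prop), exists t : nat * bool * (nat -> Prop),
  infinite_set S ->
  S t.1.1 /\ infinite_set t.2 /\ (forall y, t.2 y -> S y /\ (t.1.1 < y)%N) /\
  forall s, size s = r -> sorted ltn s -> (forall y, y \in s -> t.2 y) -> c (t.1.1 :: s) = t.1.2.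
Proof.
move=> IH c S; have [hS|hS] := pselect (infinite_set S); last first.
  by exists (0, true, S).
have [x [_ Sx]] := hS 0.
have hS' : infinite_set (fun y => S y /\ (x < y)%N).
  move=> N; have [y [hy Sy]] := hS (maxn N x.+1); exists y; split; [lia|split=>//; lia].
have [H [iH [HS [col Hcol]]]] := IH (fun s => c (x :: s)) _ hS'.
by exists (x, col, H) => _ /=; split=> //; split=> //; split=> // y /HS.
Qed.

Fixpoint seqS (F : (nat -> Prop) -> nat * bool * (nat -> Prop)) (S : nat -> Prop) (t : nat) :=
  match t with 0 => S | t'.+1 => (F (seqS F S t')).2 end.

Lemma ramsey r : ramsey_concl r.
Proof.
elim: r => [|r IH].
  move=> c S hS; exists S; split=> //; split=> //; exists (c [::]) => s.
  by move/size0nil => ->.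
move=> c S hS.
have [F HF] := choice (fun S0 => ramsey_step_one IH c S0).
pose Sq := seqS F S.
pose x := fun t => (F (Sq t)).1.1.
pose col := fun t => (F (Sq t)).1.2.
have inf : forall t, infinite_set (Sq t).
  elim => [//|t IHt]; have [_ [h _]] := HF _ IHt; exact: h.
have sub1 : forall t y, Sq t.+1 y -> Sq t y /\ (x t < y)%N.
  move=> t y; have [_ [_ [h _]]] := HF _ (inf t); exact: h.
have mem : forall t, Sq t (x t).
  move=> t; have [h _] := HF _ (inf t); exact: h.
have subT : forall t t' y, (t <= t')%N -> Sq t' y -> Sq t y.
  move=> t t' y /subnK <-; elim: (t' - t)%N => [//|d IHd] h.
  by apply: IHd; have [] := sub1 _ _ h.
have xinc : forall t, (x t < x t.+1)%N.
  by move=> t; have [] := sub1 _ _ (mem t.+1).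
have xmono : forall t t', (t < t')%N -> (x t < x t')%N.
  move=> t t' h; exact: (homo_ltn ltn_trans xinc h).
have xge : forall t, (t <= x t)%N.
  elim => [//|t IHt]; have := xinc t; lia.
have homog : forall t s, size s = r -> sorted ltn s -> (forall y, y \in s -> Sq t.+1 y) ->
    c (x t :: s) = col t.
  move=> t s h1 h2 h3; have [_ [_ [_ h]]] := HF _ (inf t); exact: h.
have [b hb] : exists b, infinite_set (fun t => col t = b).
  have [h|h] := pselect (infinite_set (fun t => col t = true)); first by exists true.
  exists false => N; move/existsNP: h => [N0 /forallNP h0].
  exists (maxn N N0); split; first by rewrite leq_maxl.
  have := h0 (maxn N N0); case E : (col _) => //.
  by case; split; [rewrite leq_maxr|].
exists (fun y => exists t, col t = b /\ y = x t); split.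
  move=> N; have [t [ht ct]] := hb N; exists (x t); split; last by exists t.
  by apply: leq_trans ht (xge t).
split.
  move=> y [t [_ ->]]; exact: (subT 0 t _ (leq0n _) (mem t)).
exists b => -[//|y s] /= [hs] hsort hin.
have [t0 [ct0 hy]] := hin y (mem_head _ _); subst y.
rewrite homog //; first exact: path_sorted hsort.
move=> z zs.
have [t' [_ hz]] : exists t, col t = b /\ z = x t by apply: hin; rewrite inE zs orbT.
subst z.
have hlt : (x t0 < x t')%N.
  by have := order_path_min ltn_trans hsort; move/allP/(_ _ zs).
have ht : (t0 < t')%N.
  rewrite ltnNge; apply/negP => h; move: hlt; rewrite ltnNge; move/negP; apply.
  case: (ltngtP t' t0) h => // [h1 _|-> _]; last exact: leqnn.
  exact: ltnW (xmono _ _ h1).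
by apply: (subT t0.+1 t') => //; exact: mem.
Qed.

Definition ch (u : nat -> bool) (k : nat) : nat := (\sum_(1 <= i < k) (u i != u i.+1))%N.

Lemma ch_S (u : nat -> bool) k : (1 <= k)%N -> ch u k.+1 = (ch u k + (u k != u k.+1))%N.
Proof. by move=> hk; rewrite /ch big_nat_recr. Qed.

Lemma AL (u : nat -> bool) k : (1 <= k)%N ->
  exists p : nat -> nat, p (ch u k) = k /\
    forall l, (l < ch u k)%N -> (p l < p l.+1)%N /\ u (p l.+1) != u (p l).
Proof.
elim: k => [//|k IH] _.
have [->|hk] := eqVneq k 0.
  by exists (fun _ => 1%N); rewrite /ch big_geq.
have hk1 : (1 <= k)%N by lia.
have [p [hp1 hp2]] := IH hk1.
rewrite ch_S //.
case E : (u k != u k.+1).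
- exists (fun l => if l == (ch u k).+1 then k.+1 else p l).
  rewrite addn1 eqxx; split => // l hl.
  have -> : (l == (ch u k).+1) = false by apply/eqP; lia.
  case: (eqVneq l.+1 (ch u k).+1) => [[e]|ne].
    by rewrite e hp1; split => //; rewrite eq_sym.
  by apply: hp2; lia.
- exists (fun l => if l == ch u k then k.+1 else p l).
  rewrite addn0 eqxx; split => // l hl.
  have -> : (l == ch u k) = false by apply/eqP; lia.
  case: (eqVneq l.+1 (ch u k)) => [e|ne].
    have [h1 h2] := hp2 l hl.
    rewrite e hp1 in h1 h2 *; split; first by lia.
    by move/negbFE/eqP: E => <-.
  by apply: hp2; lia.
Qed.

Lemma sorted_map_iota (f : nat -> nat) M : forall a,
  (forall l, (a <= l)%N -> (l.+1 < a + M)%N -> (f l < f l.+1)%N) ->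
  sorted ltn (map f (iota a M)).
Proof.
elim: M => [//|M IH] a H /=.
case: M IH H => [//|M] IH H /=.
apply/andP; split; first by apply: H; lia.
have := IH a.+1; apply => l h1 h2; apply: H; lia.
Qed.

Lemma alt_tuple (u : nat -> bool) k M : (1 <= k)%N -> (M <= ch u k)%N ->
  exists p : nat -> nat, (forall l, (l.+1 < M)%N -> (p l < p l.+1)%N) /\
    forall l, (l < M)%N -> u (p l) = odd l.
Proof.
move=> hk hM; have [p [_ hp]] := AL u hk.
pose d := if u (p 0%N) then 1%N else 0%N.
exists (fun l => p (l + d)%N); split.
  move=> l hl; rewrite addSn.
  have : (l + d < ch u k)%N by rewrite /d; case: (u _); lia.
  by move/hp => [].
elim => [|l IHl] hl.
  rewrite /d; case E : (u (p 0%N)) => //=.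
  have [_ h] : (p 0 < p 1)%N /\ u (p 1%N) != u (p 0%N) by apply: hp; lia.
  by move: h; rewrite add0n E; case: (u _).
have [_ h] : (p (l + d) < p (l + d).+1)%N /\ u (p (l + d).+1) != u (p (l + d)%N).
  by apply: hp; rewrite /d; case: (u _); lia.
rewrite addSn /=; move: h; rewrite IHl; last by lia.
by case: (u _); case: (odd l).
Qed.

Lemma ch_le_S (u : nat -> bool) k : (ch u k <= ch u k.+1)%N.
Proof.
case: k => [|k]; first by rewrite /ch !big_geq.
by rewrite (@ch_S u k.+1) // leq_addr.
Qed.

Lemma ch_mono (u : nat -> bool) k k' : (k <= k')%N -> (ch u k <= ch u k')%N.
Proof.
move/subnK <-; elim: (k' - k)%N => [//|d IH].
by apply: leq_trans IH _; rewrite addSn; apply: ch_le_S.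
Qed.

Lemma diff_sum (u : nat -> bool) K i : (K <= i)%N -> u K != u i ->
  (1 <= \sum_(K <= i' < i) (u i' != u i'.+1))%N.
Proof.
elim: i => [|i IH] hK hne.
  have e : K = 0%N by lia.
  by rewrite e eqxx in hne.
have [e|ne] := eqVneq K i.+1; first by rewrite e eqxx in hne.
rewrite big_nat_recr /=; last by lia.
case: (eqVneq (u K) (u i)) => [e|ne2].
  by rewrite -e hne addn1.
by apply: leq_trans (IH _ ne2) (leq_addr _ _); lia.
Qed.

Lemma EC (u : nat -> bool) N : (forall k, (ch u k <= N)%N) ->
  exists K, forall i, (K <= i)%N -> u i = u K.
Proof.
move=> HN; apply: contrapT => hneg.
have big : forall c, exists k, (c <= ch u k)%N.
  elim => [|c [k hk]]; first by exists 0%N.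
  pose K := maxn k 1.
  have [i hi] : exists i, (K <= i)%N /\ u i <> u K.
    apply: contrapT => h; apply: hneg; exists K => i hi.
    by apply: contrapT => h2; apply: h; exists i.
  case: hi => hi1 hi2; exists i.
  have h1 : (1 <= K)%N by rewrite leq_maxr.
  have -> : ch u i = (ch u K + \sum_(K <= i' < i) (u i' != u i'.+1))%N.
    by rewrite /ch -big_cat_nat.
  have := diff_sum hi1 (introN eqP (nesym hi2)).
  have := ch_mono u (leq_maxl k 1); rewrite -/K; lia.
have [k hk] := big N.+1; have := HN k; lia.
Qed.

Lemma nbhs_bool (b : bool) (W : set bool) : nbhs b W <-> W b.
Proof. by split; [apply: nbhs_singleton | move=> h; apply/principal_filterP]. Qed.

Lemma cvg_bool_seq (v : nat -> bool) (b : bool) :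
  v @ \oo --> b <-> exists K, forall i, (K <= i)%N -> v i = b.
Proof.
split.
  move=> /(_ [set b]) h; have /h [K _ HK] : nbhs b [set b] by apply/nbhs_bool.
  by exists K => i hi; apply: HK.
move=> [K HK] W /nbhs_bool Wb; exists K => // i /HK /= ->; exact: Wb.
Qed.

Lemma nbhs_ptws_agree (q : {ptws nat -> bool}) K :
  nbhs q [set q' : {ptws nat -> bool} | forall i, (i < K)%N -> q' i = q i].
Proof.
have H : forall t, nbhs q [set q' : {ptws nat -> bool} | q' t = q t].
  move=> t; have := (@pointwise_cvgP _ _ (nbhs q) q) (nbhs_filter q).
  case=> + _ => /(_ cvg_id t) /(_ [set q t]).
  by apply; apply/nbhs_bool.
elim: K => [|K IH].
  by apply: filterS filterT.
apply: filterS (filterI IH (H K)) => q' [h1 h2] i hi.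
have [h|h] := ltnP i K; first exact: h1.
by have -> : i = K by lia.
Qed.

Lemma cont_within_iff (A : set {ptws nat -> bool}) (f : {ptws nat -> bool} -> bool) :
  {within A, continuous f} <->
  forall q, A q -> nbhs q (fun q' => A q' -> f q' = f q).
Proof.
rewrite subspace_continuousP; split.
  move=> h q Aq; have := h q Aq [set f q]; rewrite nbhs_bool => /(_ erefl).
  by [].
move=> h q Aq W /nbhs_bool Wf; apply: filterS (h q Aq) => q' H Aq'.
by rewrite /from_subspace /= H.
Qed.

Lemma ptws_seq_cvg (g : nat -> {ptws nat -> bool}) (Q : {ptws nat -> bool}) :
  (forall t, exists K, forall k, (K <= k)%N -> g k t = Q t) ->
  g @ \oo --> Q.
Proof.
move=> H; have [_] := (@pointwise_cvgP _ _ (g @ \oo) Q) (fmap_filter _ _).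
apply => t; apply/cvg_bool_seq; exact: H.
Qed.

Definition tb (L : signature) (U : structure L) n m (phi : formula L) (x : 'I_n -> U) (b : 'I_m -> U) : bool :=
  `[< holds phi x b >].

Lemma tbP (L : signature) (U : structure L) n m (phi : formula L) (x : 'I_n -> U) (b : 'I_m -> U) :
  tb phi x b <-> holds phi x b.
Proof. by rewrite /tb; split => [/asboolP|/asboolP]. Qed.

Lemma tv_dist (L : signature) (U : structure L) n m (phi : formula L) (x y : 'I_n -> U) (b : 'I_m -> U) :
  `|tv phi x b - tv phi y b|%N = (tb phi x b != tb phi y b).
Proof. by rewrite /tv /tb; case: `[< _ >]; case: `[< _ >]. Qed.

Lemma sum_ch (L : signature) (U : structure L) n m (phi : formula L) (a : nat -> 'I_n -> U) (j : nat -> nat) b k :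
  (\sum_(1 <= i < k) `|tv phi (a (j i)) b - tv phi (a (j i.+1)) b|%N)%N =
  ch (fun i => tb phi (a (j i)) (b : 'I_m -> U)) k.
Proof. by apply: eq_bigr => i _; rewrite tv_dist. Qed.

Lemma ch_types (L : signature) (U : structure L) n m (phi : formula L) (a : nat -> 'I_n -> U)
  (j : nat -> nat) N (q : {ptws nat -> bool}) :
  (forall (b : 'I_m -> U) k, (ch (fun i => tb phi (a (j i)) b) k <= N)%N) ->
  (forall k, exists Bk, forall i, (i <= k)%N -> (j i < Bk)%N) ->
  phi_types m phi a q -> forall k, (ch (fun i => q (j i)) k <= N)%N.
Proof.
move=> HN Hj Hq k; have [Bk HB] := Hj k; have [b Hb] := Hq Bk.
suff -> : ch (fun i => q (j i)) k = ch (fun i => tb phi (a (j i)) b) k by apply: HN.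
apply: eq_big_nat => i /andP [_ hi].
have e : forall i', (i' <= k)%N -> q (j i') = tb phi (a (j i')) b.
  move=> i' hi'; apply/idP/idP => h.
    by apply/tbP; apply/(Hb (j i') (HB i' hi')).
  by apply/(Hb (j i') (HB i' hi')); apply/tbP.
by rewrite !e //; lia.
Qed.

Lemma cvg_evconst (v : nat -> bool) N : (forall k, (ch v k <= N)%N) ->
  v @ \oo --> `[< exists K, forall i, (K <= i)%N -> v i >].
Proof.
move=> /EC [K HK]; apply/cvg_bool_seq; exists K => i hi; rewrite HK //.
case E : (v K).
  by apply/esym/asboolP; exists K => i' /HK ->.
apply/esym/negbTE/asboolP => -[K' HK'].
have := HK' (maxn K K') (leq_maxr _ _); rewrite HK ?leq_maxl // E.
by [].
Qed.

Lemma HG_orient (L : signature) (U : structure L) n m (phi : formula L) (v : bool) :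
  (forall k, exists (A : nat -> 'I_n -> U) (Bf : nat -> 'I_m -> U), forall i j, (i < k)%N -> (j < k)%N ->
     (holds phi (A i) (Bf j) <-> (if v then (i < j)%N else (j <= i)%N))) ->
  forall k, HGfin U n m phi k.
Proof.
case: v => H k.
  by have [A [Bf HA]] := H k; exists A, Bf => i j hi hj; rewrite HA.
have [A [Bf HA]] := H k.+2.
exists (fun t => A (k - t)%N), (fun s => Bf (k.+1 - s)%N) => i j hi hj.
rewrite HA; [|lia|lia]; split => h; lia.
Qed.

Lemma jmono (j : nat -> nat) : (forall i, (j i < j i.+1)%N) ->
  forall i k, (j i < j k)%N = (i < k)%N.
Proof.
move=> hj i k; apply/idP/idP => h; last exact: (homo_ltn ltn_trans hj h).
rewrite ltnNge; apply/negP => hk; move: h.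
case: (ltngtP k i) hk => // [hki _|->]; last by rewrite ltnn.
by rewrite ltnNge ltnW // (homo_ltn ltn_trans hj hki).
Qed.

Lemma jle (j : nat -> nat) : (forall i, (j i < j i.+1)%N) ->
  forall i k, (i <= k)%N -> (j i <= j k)%N.
Proof.
move=> hj i k; rewrite leq_eqVlt => /orP [/eqP ->//|h].
by apply: ltnW; rewrite jmono.
Qed.

Lemma dir_stable (L : signature) (U : structure L) :
  ((forall (n m : nat) (phi : formula L) (a : nat -> 'I_n -> U),
       fbound (n + m) phi ->
       exists (j : nat -> nat) (N : nat),
         (forall i, (j i < j i.+1)%N) /\
         (exists f : {ptws nat -> bool} -> bool,
            forall q, phi_types m phi a q ->
              (fun i => q (j i)) @ \oo --> f q) /\
         (forall (b : 'I_m -> U) (k : nat),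
            (\sum_(1 <= i < k)
               `|tv phi (a (j i)) b - tv phi (a (j i.+1)) b|%N <= N)%N))
    /\
    (forall (n m : nat) (phi : formula L) (a : nat -> 'I_n -> U)
            (f : {ptws nat -> bool} -> bool),
       fbound (n + m) phi ->
       (forall q, phi_types m phi a q -> (fun i => q i) @ \oo --> f q) ->
       (exists N : nat, forall (b : 'I_m -> U) (k : nat),
            (\sum_(1 <= i < k)
               `|tv phi (a i) b - tv phi (a i.+1) b|%N <= N)%N) ->
       {within phi_types m phi a, continuous f})) ->
  stable_in U.
Proof.
move=> [H1 H2] n m phi hb [a [b hab]].
have [j [N [hj [_ hN]]]] := H1 n m phi a hb.
pose a' := fun i => a (j i).
pose f' := fun q : {ptws nat -> bool} => `[< exists K, forall i, (K <= i)%N -> q i >].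
have hN' : forall (b : 'I_m -> U) k, (ch (fun i => tb phi (a' i) b) k <= N)%N.
  by move=> b' k; rewrite -(sum_ch phi a' id); apply: hN.
have conv : forall q, phi_types m phi a' q -> (fun i => q i) @ \oo --> f' q.
  move=> q hq; apply: (@cvg_evconst _ N).
  apply: (@ch_types _ _ _ _ phi a' id N q hN') => // k.
  by exists k.+1 => i hi /=; lia.
have cont := H2 n m phi a' f' hb conv (ex_intro _ N (fun b k => hN b k)).
have real : forall k (q : {ptws nat -> bool}), (forall i, q i = (i < k)%N) ->
    forall i, holds phi (a' i) (b (j k)) <-> q i.
  by move=> k q hq i; rewrite hq hab jmono.
pose Qi : {ptws nat -> bool} := fun _ => true.
have AQ : phi_types m phi a' Qi.
  move=> k; exists (b (j k)) => i hi; rewrite (real k (fun i => (i < k)%N)) //.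
have fQ : f' Qi = true by apply/asboolP; exists 0%N.
have := (cont_within_iff _ _).1 cont Qi AQ.
pose g := fun k : nat => ((fun i => (i < k)%N) : {ptws nat -> bool}).
have gc : g @ \oo --> Qi.
  apply: ptws_seq_cvg => t; exists t.+1 => k hk; rewrite /g /Qi; lia.
move=> /gc [K _ HK].
have /HK /= : (K <= K)%N by [].
have Ag : phi_types m phi a' (g K).
  move=> k; exists (b (j K)) => i _; exact: real.
move=> /(_ Ag); rewrite fQ.
have : f' (g K) = false.
  apply/negbTE/asboolP => -[K' HK']; have := HK' (maxn K K') (leq_maxr _ _).
  by rewrite /g ltnNge leq_maxl.
by move=> ->.
Qed.

Fixpoint iterI (G : nat -> nat) (K0 : nat) (t : nat) : nat :=
  match t with 0 => G K0 | t'.+1 => G (iterI G K0 t').+1 end.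

Definition Kof (G : nat -> nat) (K0 : nat) (t : nat) : nat :=
  match t with 0 => K0 | t'.+1 => (iterI G K0 t').+1 end.

Lemma not_OP_HG (L : signature) (U : structure L) n m (phi : formula L) :
  stable_in U -> aleph1_saturated U -> fbound (n + m) phi ->
  ~ (forall k, HGfin U n m phi k).
Proof. by move=> st sat1 hb H; apply: (st n m phi hb); apply: CL. Qed.

Lemma dir_ii (L : signature) (U : structure L) :
  stable_in U -> aleph1_saturated U ->
    (forall (n m : nat) (phi : formula L) (a : nat -> 'I_n -> U)
            (f : {ptws nat -> bool} -> bool),
       fbound (n + m) phi ->
       (forall q, phi_types m phi a q -> (fun i => q i) @ \oo --> f q) ->
       (exists N : nat, forall (b : 'I_m -> U) (k : nat),
            (\sum_(1 <= i < k)
               `|tv phi (a i) b - tv phi (a i.+1) b|%N <= N)%N) ->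
       {within phi_types m phi a, continuous f}).
Proof.
move=> st sat1 n m phi a f hb conv _.
apply/cont_within_iff => q Aq; apply: contrapT => hneg.
pose v := f q.
have [K0 HK0] := (cvg_bool_seq _ _).1 (conv q Aq).
have ex : forall K, exists qr : {ptws nat -> bool} * nat,
    phi_types m phi a qr.1 /\ (forall i, (i < K)%N -> qr.1 i = q i) /\ (K <= qr.2)%N /\
    forall i, (qr.2 <= i)%N -> qr.1 i = ~~ v.
  move=> K.
  have [q' [hq'1 [hq'2 hq'3]]] : exists q' : {ptws nat -> bool},
      (forall i, (i < K)%N -> q' i = q i) /\ phi_types m phi a q' /\ f q' <> f q.
    apply: contrapT => h; apply: hneg; apply: filterS (nbhs_ptws_agree q K) => q' h1 h2.
    by apply: contrapT => h3; apply: h; exists q'.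
  have [K' HK'] := (cvg_bool_seq _ _).1 (conv q' hq'2).
  exists (q', maxn K K'); split => //; split => //; split; first by rewrite leq_maxl.
  move=> i hi /=; rewrite HK'; last by apply: leq_trans hi; rewrite leq_maxr.
  by move: hq'3; rewrite /v; case: (f q'); case: (f q).
have [G HG] := choice ex.
pose r := fun K => (G K).2.
pose I := iterI r K0.
pose Kf := Kof r K0.
pose Q := fun s => (G (Kf s)).1.
have hI : forall t, I t = r (Kf t) by case.
have KleI : forall t, (Kf t <= I t)%N.
  by move=> t; rewrite hI; have [_ [_ [h _]]] := HG (Kf t).
have Iinc : forall t, (I t < I t.+1)%N.
  by move=> t; have := KleI t.+1; rewrite /Kf /=.
have Kf0 : forall t, (K0 <= Kf t)%N.
  elim => [//|t IH]; rewrite /Kf /= -/(I t); have := KleI t; lia.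
have Ilt : forall t s, (t < s)%N -> (I t < Kf s)%N.
  move=> t [//|s] hts; rewrite /Kf /= ltnS -/I.
  by rewrite ltnS in hts; apply: jle.
have Qv : forall s t, Q s (I t) = if (t < s)%N then v else ~~ v.
  move=> s t; case: ltnP => hts.
    have [_ [h _]] := HG (Kf s); rewrite /Q h; last exact: Ilt.
    by apply: HK0; apply: leq_trans (Kf0 t) (KleI t).
  have [_ [_ [_ h]]] := HG (Kf s); rewrite /Q h // -/(r (Kf s)) -hI.
  exact: jle.
have AQ : forall s, phi_types m phi a (Q s) by move=> s; have [] := HG (Kf s).
apply: (not_OP_HG st sat1 hb); apply: (HG_orient (v := v)) => k.
have [Bf HB] := choice (fun s => AQ s (I k)).
exists (fun t => a (I t)), Bf => t s ht hs.
rewrite (HB s (I t)); last by rewrite jmono.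
rewrite Qv; case: (v); case: ltnP => //=; split => //.
Qed.

Lemma dir_i (L : signature) (U : structure L) :
  stable_in U -> aleph1_saturated U ->
  (forall (n m : nat) (phi : formula L) (a : nat -> 'I_n -> U),
       fbound (n + m) phi ->
       exists (j : nat -> nat) (N : nat),
         (forall i, (j i < j i.+1)%N) /\
         (exists f : {ptws nat -> bool} -> bool,
            forall q, phi_types m phi a q ->
              (fun i => q (j i)) @ \oo --> f q) /\
         (forall (b : 'I_m -> U) (k : nat),
            (\sum_(1 <= i < k)
               `|tv phi (a (j i)) b - tv phi (a (j i.+1)) b|%N <= N)%N)).
Proof.
move=> st sat1 n m phi a hb.
have [k0 hk0] : exists k0, ~ HGfin U n m phi k0.
  apply: contrapT => h; apply: (not_OP_HG st sat1 hb) => k.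
  by apply: contrapT => h2; apply: h; exists k.
pose M := (2 * k0)%N.
pose c := fun s : seq nat => `[< exists b : 'I_m -> U, forall l, (l < size s)%N ->
                                  tb phi (a (nth 0%N s l)) b = odd l >].
have infT : infinite_set setT by move=> N; exists N.
have [H [iH [_ [col Hcol]]]] := @ramsey M c setT infT.
have [nx Hnx] := choice iH.
pose j := fix j i := match i with 0 => nx 0%N | i'.+1 => nx (j i').+1 end.
have jH : forall i, H (j i) by case => [|i] /=; [case: (Hnx 0%N) | case: (Hnx (j i).+1)].
have hj : forall i, (j i < j i.+1)%N by move=> i /=; have [] := Hnx (j i).+1.
have tupc : forall p : nat -> nat, (forall l, (l.+1 < M)%N -> (p l < p l.+1)%N) ->
    c (mkseq (fun l => j (p l)) M) = col.
  move=> p hp; apply: Hcol; first by rewrite size_mkseq.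
    by apply: sorted_map_iota => l _ hl; rewrite jmono //; apply: hp.
  by move=> x /mapP [l _ ->]; apply: jH.
case: col Hcol tupc => Hcol tupc.
  (* color true: half graph of size k0 *)
  exfalso; apply: hk0.
  have ex : forall s, exists b : 'I_m -> U, (s < k0)%N -> forall l, (l < M)%N ->
      tb phi (a (j (if (l < 2 * s)%N then l else l.+1))) b = odd l.
    move=> s; have [hs|hs] := ltnP s k0; last by exists (fun _ => s_inh U).
    have hc := tupc (fun l => if (l < 2 * s)%N then l else l.+1).
    have /hc /asboolP [b hb'] : forall l, (l.+1 < M)%N ->
        ((if (l < 2 * s)%N then l else l.+1) < (if (l.+1 < 2 * s)%N then l.+1 else l.+2))%N.
      by move=> l hl; case: (ltnP l (2 * s)) => h1; case: (ltnP l.+1 (2 * s)) => h2; lia.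
    exists b => _ l hl.
    by have := hb' l; rewrite size_mkseq nth_mkseq // => ->.
  have [Bf HB] := choice ex.
  exists (fun t => a (j (2 * t).+1)), Bf => t s ht hs.
  have := HB s hs (if (t < s)%N then (2 * t).+1 else (2 * t)%N).
  have e : (if ((if (t < s)%N then (2 * t).+1 else (2 * t)%N) < 2 * s)%N
            then (if (t < s)%N then (2 * t).+1 else (2 * t)%N)
            else (if (t < s)%N then (2 * t).+1 else (2 * t)%N).+1) = (2 * t).+1.
    case: (ltnP t s) => h.
      by have -> : ((2 * t).+1 < 2 * s)%N by lia.
    by have -> : ((2 * t) < 2 * s)%N = false by lia.
  rewrite e => hodd.
  have {}hodd := hodd (ltac:(rewrite /M; case: (ltnP t s) => _; lia)).
  by rewrite -tbP hodd; case: (ltnP t s) => _ /=; rewrite ?oddS oddM.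
have bound : forall (b : 'I_m -> U) k, (ch (fun i => tb phi (a (j i)) b) k <= M)%N.
  move=> b k; rewrite leqNgt; apply/negP => hM.
  have hk : (1 <= k)%N by case: k hM => //; rewrite /ch big_geq.
  have [p [hp1 hp2]] := alt_tuple hk (ltnW hM).
  have hP : exists b0 : 'I_m -> U, forall l, (l < size (mkseq (fun l => j (p l)) M))%N ->
      tb phi (a (nth 0%N (mkseq (fun l => j (p l)) M) l)) b0 = odd l.
    exists b => l; rewrite size_mkseq => hl; rewrite nth_mkseq //; exact: hp2.
  by move: (tupc p hp1); rewrite /c (asboolT hP).
exists j, M; split => //; split.
  exists (fun q : {ptws nat -> bool} => `[< exists K, forall i, (K <= i)%N -> q (j i) >]).
  move=> q hq; apply: (@cvg_evconst (fun i => q (j i)) M).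
  apply: (ch_types bound) => // k; exists (j k).+1 => i hi; rewrite ltnS; exact: jle.
by move=> b k; rewrite sum_ch; apply: bound.
Qed.

Unset Implicit Arguments.

Theorem corollary2p15 (L : signature) (T : theory L) (U : structure L) :
  complete_theory T -> is_model U T -> aleph1_saturated U ->
  (stable_in U <->
   ((forall (n m : nat) (phi : formula L) (a : nat -> 'I_n -> U),
       fbound (n + m) phi ->
       exists (j : nat -> nat) (N : nat),
         (forall i, (j i < j i.+1)%N) /\
         (exists f : {ptws nat -> bool} -> bool,
            forall q, phi_types m phi a q ->
              (fun i => q (j i)) @ \oo --> f q) /\
         (forall (b : 'I_m -> U) (k : nat),
            (\sum_(1 <= i < k)
               `|tv phi (a (j i)) b - tv phi (a (j i.+1)) b|%N <= N)%N))
    /\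
    (forall (n m : nat) (phi : formula L) (a : nat -> 'I_n -> U)
            (f : {ptws nat -> bool} -> bool),
       fbound (n + m) phi ->
       (forall q, phi_types m phi a q -> (fun i => q i) @ \oo --> f q) ->
       (exists N : nat, forall (b : 'I_m -> U) (k : nat),
            (\sum_(1 <= i < k)
               `|tv phi (a i) b - tv phi (a i.+1) b|%N <= N)%N) ->
       {within phi_types m phi a, continuous f}))).
Proof.
move=> _ _ sat1; split.
  by move=> st; split; [exact: dir_i | exact: dir_ii].
exact: dir_stable.
Qed.
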